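(* For every $n\ge4$, the poset $(\mathcal{G}_{\mathsf{cwvg}}(n),\preceq_{\mathsf{MWC}})$ is not a tree; that is, there is a game in $\mathcal{G}_{\mathsf{cwvg}}(n)$ that covers at least two distinct games in this poset.
   Context: Let $N=\{1,\dots,n\}$. A simple game is a function $v:2^N\to\{0,1\}$ (all-losing allowed); a minimal winning coalition is a winning coalition $S$ with $S\setminus\{i\}$ losing for all $i\in S$; $W_{\min,G}$ denotes the set of minimal winning coalitions of $G$. A weighted voting game is a simple game with $q\ge0$, $w_i\ge0$ and $v(S)=1\iff\sum_{i\in S}w_i\ge q$. Write $i\succeq j$ if $v(S\cup\{i\})\ge v(S\cup\{j\})$ for all $S\subseteq N\setminus\{i,j\}$. $\mathcal{G}_{\mathsf{cwvg}}(n)$ is the set of weighted voting games on $N$ with $1\succeq2\succeq\cdots\succeq n$. For $G,G'\in\mathcal{G}_{\mathsf{cwvg}}(n)$, $G\preceq_{\mathsf{MWC}}G'$ iff there is a sequence $G=G_1,\dots,G_k=G'$ ($k\ge1$) in $\mathcal{G}_{\mathsf{cwvg}}(n)$ with $W_{\min,G_i}\subset W_{\min,G_{i+1}}$ and $|W_{\min,G_{i+1}}|=|W_{\min,G_i}|+1$ for all $i<k$. $y$ covers $x$ if $x\preceq y$, $x\ne y$ and no $z\notin\{x,y\}$ satisfies $x\preceq z\preceq y$. The poset (which has a least element) is called a tree if its Hasse diagram is a tree, i.e., every element covers at most one element. *)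

(* Defs.v *)
(* Players N = {1,..,n} are represented by 'I_n = {0,..,n-1}
   (player k+1 of the paper is the ordinal k). *)
From HB Require Import structures.
From mathcomp Require Import all_boot all_order all_algebra.
Set Implicit Arguments. Unset Strict Implicit. Unset Printing Implicit Defensive.
Import Order.TTheory GRing.Theory Num.Theory.
Local Open Scope ring_scope.

(* A simple game v : 2^N -> {0,1} (all-losing allowed), as a finite function. *)
Definition game (n : nat) := {ffun {set 'I_n} -> bool}.

Definition Wmin (n : nat) (G : game n) : {set {set 'I_n}} :=
  [set S | G S && [forall i in S, ~~ G (S :\ i)]].

Definition weighted (R : realFieldType) (n : nat) (G : game n) : Prop :=
  exists (q : R) (w : 'I_n -> R),
    0 <= q /\ (forall i, 0 <= w i) /\
    (forall S : {set 'I_n}, G S = (q <= \sum_(i in S) w i)).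

(* Desirability relation i >= j: v(S+i) >= v(S+j) for 0/1 values, i.e. v(S+j) -> v(S+i). *)
Definition desir (n : nat) (G : game n) (i j : 'I_n) : Prop :=
  forall S : {set 'I_n}, i \notin S -> j \notin S ->
    (G (j |: S) ==> G (i |: S)).

Definition cwvg (R : realFieldType) (n : nat) (G : game n) : Prop :=
  weighted R G /\ (forall i j : 'I_n, nat_of_ord j = i.+1 -> desir G i j).

Definition mwc_step (n : nat) (G G' : game n) : Prop :=
  Wmin G \proper Wmin G' /\ #|Wmin G'| = #|Wmin G|.+1.

Inductive leMWC (R : realFieldType) (n : nat) (G : game n) : game n -> Prop :=
  | leMWC_refl : cwvg R G -> leMWC R G G
  | leMWC_step : forall H H', leMWC R G H -> cwvg R H' -> mwc_step H H' ->
                 leMWC R G H'.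

Definition covers (R : realFieldType) (n : nat) (x y : game n) : Prop :=
  leMWC R x y /\ x <> y /\
  ~ (exists z, z <> x /\ z <> y /\ leMWC R x z /\ leMWC R z y).

(* Main.v *)
Require Import Defs.
From mathcomp Require Import all_boot all_order all_algebra zify.
Set Implicit Arguments. Unset Strict Implicit. Unset Printing Implicit Defensive.
Import Order.TTheory GRing.Theory Num.Theory.

Definition pl (m k : nat) : 'I_(m.+4) := inord k.

Lemma pl_eq m i j : i < 4 -> j < 4 -> (pl m i == pl m j) = (i == j).
Proof.
move=> hi hj; apply/eqP/eqP => [h|->//].
by have := congr1 val h; rewrite /= !inordK //; lia.
Qed.

Definition wsum (l : seq nat) (b0 b1 b2 b3 : bool) :=
  ((if b0 then nth 0 l 0 else 0) + (if b1 then nth 0 l 1 else 0) +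
   (if b2 then nth 0 l 2 else 0) + (if b3 then nth 0 l 3 else 0))%N.

Lemma sum_aux m (l : seq nat) (S : {set 'I_(m.+4)}) (o0 o1 o2 o3 : 'I_(m.+4)) :
  val o0 = 0 -> val o1 = 1 -> val o2 = 2 -> val o3 = 3 ->
  ((if o0 \in S then nth 0 l o0 else 0) + ((if o1 \in S then nth 0 l o1 else 0) +
  ((if o2 \in S then nth 0 l o2 else 0) + ((if o3 \in S then nth 0 l o3 else 0) + 0))))%N
  = wsum l (pl m 0 \in S) (pl m 1 \in S) (pl m 2 \in S) (pl m 3 \in S).
Proof.
move=> h0 h1 h2 h3.
have -> : o0 = pl m 0 by apply/val_inj; rewrite h0 /= inordK.
have -> : o1 = pl m 1 by apply/val_inj; rewrite h1 /= inordK.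
have -> : o2 = pl m 2 by apply/val_inj; rewrite h2 /= inordK.
have -> : o3 = pl m 3 by apply/val_inj; rewrite h3 /= inordK.
by rewrite /wsum !inordK // addn0 !addnA.
Qed.

Lemma sum_bits m (l : seq nat) (S : {set 'I_(m.+4)}) : size l <= 4 ->
  (\sum_(i in S) nth 0 l i = wsum l (pl m 0 \in S) (pl m 1 \in S) (pl m 2 \in S) (pl m 3 \in S))%N.
Proof.
move=> hl; rewrite big_mkcond /= !big_ord_recl.
rewrite big1 => [|i _]; last first.
  case: ifP => // _; rewrite nth_default //=.
  by rewrite /bump /= !add1n; lia.
by apply: sum_aux.
Qed.


Definition fq (l : seq nat) (q : nat) (b0 b1 b2 b3 : bool) : bool := (q <= wsum l b0 b1 b2 b3)%N.

Definition mw (F : bool -> bool -> bool -> bool -> bool) (b0 b1 b2 b3 : bool) : bool :=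
  [&& F b0 b1 b2 b3, b0 ==> ~~ F false b1 b2 b3, b1 ==> ~~ F b0 false b2 b3,
      b2 ==> ~~ F b0 b1 false b3 & b3 ==> ~~ F b0 b1 b2 false].

Definition gm (R : realFieldType) (m : nat) (l : seq nat) (q : nat) : game m.+4 :=
  [ffun S : {set 'I_(m.+4)} => ((q%:R : R) <= \sum_(i in S) (nth 0 l i)%:R)%R].

Definition PP (m : nat) : {set 'I_(m.+4)} := [set pl m 0; pl m 1; pl m 2; pl m 3].

Lemma gmE R m l q S : size l <= 4 ->
  gm R m l q S = fq l q (pl m 0 \in S) (pl m 1 \in S) (pl m 2 \in S) (pl m 3 \in S).
Proof.
by move=> hl; rewrite ffunE -natr_sum ler_nat sum_bits.
Qed.

Lemma WminE m (G : game m.+4) F :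
  (forall S, G S = F (pl m 0 \in S) (pl m 1 \in S) (pl m 2 \in S) (pl m 3 \in S)) ->
  forall S, (S \in Wmin G) =
    (S \subset PP m) && mw F (pl m 0 \in S) (pl m 1 \in S) (pl m 2 \in S) (pl m 3 \in S).
Proof.
move=> HG S; rewrite inE; apply/andP/andP.
  case=> GS /forall_inP Hmin.
  have sub : S \subset PP m.
    apply/subsetP => i iS; apply/negPn/negP => iP.
    have := Hmin i iS; rewrite HG !in_setD1.
    move: iP; rewrite !inE => /norP [/norP [/norP [n0 n1] n2] n3].
    by rewrite ![pl m _ == i]eq_sym (negbTE n0) (negbTE n1) (negbTE n2) (negbTE n3) /= -HG GS.
  split=> //; rewrite /mw -HG GS /=.
  apply/and4P; split; apply/implyP => Hk.
  - by have := Hmin _ Hk; rewrite HG !in_setD1 !pl_eq.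
  - by have := Hmin _ Hk; rewrite HG !in_setD1 !pl_eq.
  - by have := Hmin _ Hk; rewrite HG !in_setD1 !pl_eq.
  - by have := Hmin _ Hk; rewrite HG !in_setD1 !pl_eq.
case=> sub /and5P [FS H0 H1 H2 H3]; split; first by rewrite HG.
apply/forall_inP => i iS.
have := subsetP sub i iS; rewrite !inE -!orbA => /or4P [] /eqP ie; rewrite ie in iS *; rewrite HG !in_setD1 !pl_eq //=.
- exact: (implyP H0 iS).
- exact: (implyP H1 iS).
- exact: (implyP H2 iS).
- exact: (implyP H3 iS).
Qed.

Lemma extP m (S T : {set 'I_(m.+4)}) : S \subset PP m -> T \subset PP m ->
  (S == T) = [&& (pl m 0 \in S) == (pl m 0 \in T), (pl m 1 \in S) == (pl m 1 \in T),
                 (pl m 2 \in S) == (pl m 2 \in T) & (pl m 3 \in S) == (pl m 3 \in T)].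
Proof.
move=> sS sT; apply/eqP/and4P => [->|[/eqP e0 /eqP e1 /eqP e2 /eqP e3]]; first by rewrite !eqxx.
apply/setP => i; case iP: (i \in PP m).
  by move: iP; rewrite !inE -!orbA => /or4P [] /eqP ->.
apply/idP/idP => h; [have := subsetP sS i h | have := subsetP sT i h]; by rewrite iP.
Qed.

Lemma step_lemma m (G x : game m.+4) FG Fx (T : {set 'I_(m.+4)}) t0 t1 t2 t3 :
  (forall S, G S = FG (pl m 0 \in S) (pl m 1 \in S) (pl m 2 \in S) (pl m 3 \in S)) ->
  (forall S, x S = Fx (pl m 0 \in S) (pl m 1 \in S) (pl m 2 \in S) (pl m 3 \in S)) ->
  T \subset PP m ->
  pl m 0 \in T = t0 -> pl m 1 \in T = t1 -> pl m 2 \in T = t2 -> pl m 3 \in T = t3 ->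
  (forall b0 b1 b2 b3, mw FG b0 b1 b2 b3 =
     [&& b0 == t0, b1 == t1, b2 == t2 & b3 == t3] || mw Fx b0 b1 b2 b3) ->
  ~~ mw Fx t0 t1 t2 t3 ->
  mwc_step x G.
Proof.
move=> HG Hx tP h0 h1 h2 h3 Hmw Hn.
have E : Wmin G = T |: Wmin x.
  apply/setP => S; rewrite in_setU1 (WminE HG) (WminE Hx).
  case sP: (S \subset PP m) => /=.
    by rewrite Hmw extP // h0 h1 h2 h3.
  by case: eqP => // eST; rewrite eST tP in sP.
have Tn : T \notin Wmin x by rewrite (WminE Hx) tP h0 h1 h2 h3.
split; last by rewrite E cardsU1 Tn.
by rewrite properEcard E subsetU1 cardsU1 Tn /= add1n ltnSn.
Qed.

Lemma chain R n (x y : game n) : leMWC R x y -> x = y \/ #|Wmin x| < #|Wmin y|.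
Proof.
elim=> [_|H H' _ IH _ [_ Hc]]; first by left.
right; rewrite Hc; case: IH => [->|]; lia.
Qed.

Lemma covers_step R n (x G : game n) : cwvg R x -> cwvg R G -> mwc_step x G -> covers R x G.
Proof.
move=> cx cG st; have [_ Hc] := st.
split; first exact: (leMWC_step (leMWC_refl cx) cG st).
split; first by move=> e; rewrite e in Hc; lia.
case=> z [zx [zG [/chain [e|l1] /chain [e'|l2]]]]; try by [rewrite e in zx | rewrite e' in zG].
lia.
Qed.

Lemma cwvg_gm R m l q : size l <= 4 -> (forall k, nth 0 l k.+1 <= nth 0 l k) ->
  cwvg R (gm R m l q).
Proof.
move=> hl hmono; split.
  exists (q%:R)%R, (fun i => (nth 0 l i)%:R)%R; split; first exact: ler0n.
  split; first by move=> i; exact: ler0n.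
  by move=> S; rewrite ffunE.
move=> i j hij S hi hj; rewrite !ffunE !big_setU1 //=; apply/implyP => h.
apply: le_trans h _; rewrite lerD2r ler_nat hij; exact: hmono.
Qed.

Theorem proposition3 (R : realFieldType) (n : nat) : 4 <= n ->
  exists (G x1 x2 : game n),
    cwvg R G /\ x1 <> x2 /\ covers R x1 G /\ covers R x2 G.
Proof.
case: n => [|[|[|[|m]]]] // _.
have cG : cwvg R (gm R m [:: 2;1;1;1] 3).
  by apply: cwvg_gm => // -[|[|[|[|k]]]] //=; rewrite !nth_nil.
have c1 : cwvg R (gm R m [:: 3;1;1;1] 4).
  by apply: cwvg_gm => // -[|[|[|[|k]]]] //=; rewrite !nth_nil.
have c2 : cwvg R (gm R m [:: 3;2;2;1] 5).
  by apply: cwvg_gm => // -[|[|[|[|k]]]] //=; rewrite !nth_nil.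
exists (gm R m [:: 2;1;1;1] 3), (gm R m [:: 3;1;1;1] 4), (gm R m [:: 3;2;2;1] 5).
split=> //; split.
  move=> e; have := congr1 (fun g : game _ => g [set pl m 0; pl m 3]) e.
  by rewrite /= !gmE // /fq /wsum !inE !pl_eq.
split; apply: covers_step => //.
  apply: (@step_lemma m _ _ (fq [:: 2;1;1;1] 3) (fq [:: 3;1;1;1] 4)
            [set pl m 1; pl m 2; pl m 3] false true true true).
  - by move=> S; exact: gmE.
  - by move=> S; exact: gmE.
  - apply/subsetP => i; rewrite !inE => /orP [/orP [] | ] /eqP ->; by rewrite !eqxx ?orbT.
  - by rewrite !inE !pl_eq.
  - by rewrite !inE !pl_eq.
  - by rewrite !inE !pl_eq.
  - by rewrite !inE !pl_eq.
  - by do 4 case.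
  - by [].
apply: (@step_lemma m _ _ (fq [:: 2;1;1;1] 3) (fq [:: 3;2;2;1] 5)
          [set pl m 0; pl m 3] true false false true).
- by move=> S; exact: gmE.
- by move=> S; exact: gmE.
- apply/subsetP => i; rewrite !inE => /orP [] /eqP ->; by rewrite !eqxx ?orbT.
- by rewrite !inE !pl_eq.
- by rewrite !inE !pl_eq.
- by rewrite !inE !pl_eq.
- by rewrite !inE !pl_eq.
- by do 4 case.
- by [].
Qed.
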